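(* Let $G$ be a finite simple graph that contains no subgraph isomorphic to $C_n$ for any $n\ge 4$ with $n\not\equiv 0\pmod 4$. Let $u\in V(G)$ and, for $i\ge 1$, let $N_i=\{v\in V(G) : d(u,v)=i\}$. Let $i\ge 1$ and $a,b\in N_i$. If $ab$ is not an edge of any subgraph of $G$ isomorphic to $K_3$, then $ab\notin E(G)$.
   Context: $d(u,v)$ is the shortest-path distance in $G$; $C_n$ is the cycle on $n$ vertices; subgraphs need not be induced. *)

(* Defs.v *)
From mathcomp Require Import all_boot.
Set Implicit Arguments. Unset Strict Implicit. Unset Printing Implicit Defensive.

Definition simple_graph (T : finType) (e : rel T) : Prop :=
  symmetric e /\ irreflexive e.

(* G contains a (not necessarily induced) subgraph isomorphic to C_n:
   n pairwise distinct vertices v_0,...,v_{n-1} with v_j v_{j+1 mod n} edges. *)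
Definition has_Cn_subgraph (T : finType) (e : rel T) (n : nat) : Prop :=
  exists s : seq T, [/\ size s = n, uniq s & cycle e s].

Definition walk_of_length (T : finType) (e : rel T) (u v : T) (k : nat) : Prop :=
  exists p : seq T, [/\ size p = k, path e u p & last u p = v].

Definition dist_eq (T : finType) (e : rel T) (u v : T) (i : nat) : Prop :=
  walk_of_length e u v i /\ forall k, k < i -> ~ walk_of_length e u v k.

Definition in_layer (T : finType) (e : rel T) (u : T) (i : nat) (v : T) : Prop :=
  dist_eq e u v i.

Definition edge_in_triangle (T : finType) (e : rel T) (a b : T) : Prop :=
  [/\ a != b, e a b & exists c, [/\ c != a, c != b, e a c & e b c]].

(* Main.v *)
Require Import Defs.
From mathcomp Require Import all_boot.
From mathcomp Require Import zify.

Lemma mkseqS (T : Type) (g : nat -> T) n :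
  mkseq g n.+1 = g 0 :: mkseq (fun k => g k.+1) n.
Proof. by rewrite /mkseq /= -[1]/(1+0) iotaDl -map_comp. Qed.

Lemma path_mkseq (T : finType) (e : rel T) n : forall f : nat -> T,
  (forall k, k < n -> e (f k) (f k.+1)) ->
  path e (f 0) (mkseq (fun k => f k.+1) n) /\
  last (f 0) (mkseq (fun k => f k.+1) n) = f n.
Proof.
elim: n => [|n IH] f H; first by [].
rewrite mkseqS /=.
have [H1 H2] := IH (fun k => f k.+1) (fun k hk => H k.+1 hk).
rewrite H1 H2 andbT; split => //; exact: (H 0).
Qed.

Lemma walk_fun (T : finType) (e : rel T) n (f : nat -> T) :
  (forall k, k < n -> e (f k) (f k.+1)) -> walk_of_length e (f 0) (f n) n.
Proof.
move=> H; have [H1 H2] := @path_mkseq T e n f H.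
by exists (mkseq (fun k => f k.+1) n); rewrite size_mkseq.
Qed.

Lemma walk_cat (T : finType) (e : rel T) u v w k m :
  walk_of_length e u v k -> walk_of_length e v w m -> walk_of_length e u w (k+m).
Proof.
move=> [p [sp pp lp]] [q [sq pq lq]]; exists (p ++ q).
by rewrite size_cat cat_path last_cat lp sp sq pp pq.
Qed.

Lemma walk_sub (T : finType) (e : rel T) n (f : nat -> T) k l :
  (forall t, t < n -> e (f t) (f t.+1)) -> k <= l <= n ->
  walk_of_length e (f k) (f l) (l - k).
Proof.
move=> H /andP[kl ln].
have := @walk_fun T e (l - k) (fun j => f (k + j)).
rewrite addn0 subnKC //; apply=> t ht; rewrite addnS; apply: H; lia.
Qed.

Lemma walk_rev (T : finType) (e : rel T) n (f : nat -> T) k l :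
  symmetric e ->
  (forall t, t < n -> e (f t) (f t.+1)) -> k <= l <= n ->
  walk_of_length e (f l) (f k) (l - k).
Proof.
move=> sym H /andP[kl ln].
have := @walk_fun T e (l - k) (fun j => f (l - j)).
rewrite subn0 subKn //; apply=> t ht.
have -> : l - t = (l - t.+1).+1 by lia.
rewrite sym; apply: H; lia.
Qed.

Lemma walk_to_fun (T : finType) (e : rel T) u v i :
  walk_of_length e u v i ->
  exists f : nat -> T, [/\ f 0 = u, f i = v & forall t, t < i -> e (f t) (f t.+1)].
Proof.
move=> [p [sp pp lp]]; exists (fun k => nth u (u :: p) k); split => //.
  by rewrite -sp -last_nth.
move=> t ht; move/(pathP u): pp => /(_ t); rewrite sp => /(_ ht) //.
Qed.

Arguments walk_cat {T e u v w k m}.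

Theorem mainTheorem8 (T : finType) (e : rel T) :
  simple_graph e ->
  (forall n, 4 <= n -> n %% 4 != 0 -> ~ has_Cn_subgraph e n) ->
  forall (u : T) (i : nat) (a b : T),
    1 <= i -> in_layer e u i a -> in_layer e u i b ->
    ~ edge_in_triangle e a b ->
    ~~ e a b.
Proof.
move=> [sym irr] noC u i a b i1 [wa ma] [wb mb] notri.
apply/negP => eab.
have anb : a != b by apply/eqP => ab; move: eab; rewrite ab irr.
have [A [A0 Ai HA]] := @walk_to_fun T e u a i wa.
have [B [B0 Bi HB]] := @walk_to_fun T e u b i wb.
have cross : forall k k', k <= i -> k' <= i -> A k = B k' -> k = k'.
  move=> k k' ki k'i E.
  case: (ltngtP k k') => // lt.
  - apply: False_ind; apply: (mb (k + (i - k'))); first lia.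
    have w1 := @walk_sub T e i A 0 k HA ltac:(lia).
    have w2 := @walk_sub T e i B k' i HB ltac:(lia).
    rewrite A0 E subn0 in w1; rewrite Bi in w2.
    exact: (walk_cat w1 w2).
  - apply: False_ind; apply: (ma (k' + (i - k))); first lia.
    have w1 := @walk_sub T e i B 0 k' HB ltac:(lia).
    have w2 := @walk_sub T e i A k i HA ltac:(lia).
    rewrite B0 -E subn0 in w1; rewrite Ai in w2.
    exact: (walk_cat w1 w2).
have selfA : forall k k', k <= i -> k' <= i -> A k = A k' -> k = k'.
  move=> k k' ki k'i E.
  wlog lt : k k' ki k'i E / k < k'.
    move=> W; case: (ltngtP k k') => // lt; [exact: W | symmetry; exact: W].
  apply: False_ind; apply: (ma (k + (i - k'))); first lia.
  have w1 := @walk_sub T e i A 0 k HA ltac:(lia).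
  have w2 := @walk_sub T e i A k' i HA ltac:(lia).
  rewrite A0 E subn0 in w1; rewrite Ai in w2.
  exact: (walk_cat w1 w2).
have selfB : forall k k', k <= i -> k' <= i -> B k = B k' -> k = k'.
  move=> k k' ki k'i E.
  wlog lt : k k' ki k'i E / k < k'.
    move=> W; case: (ltngtP k k') => // lt; [exact: W | symmetry; exact: W].
  apply: False_ind; apply: (mb (k + (i - k'))); first lia.
  have w1 := @walk_sub T e i B 0 k HB ltac:(lia).
  have w2 := @walk_sub T e i B k' i HB ltac:(lia).
  rewrite B0 E subn0 in w1; rewrite Bi in w2.
  exact: (walk_cat w1 w2).
pose P := fun k => (k < i) && (A k == B k).
have exP : exists k, P k by exists 0; rewrite /P A0 B0 eqxx andbT.
have bndP : forall k, P k -> k <= i by move=> k /andP[/ltnW].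
case: (ex_maxnP exP bndP) => j /andP[ji /eqP ABj] maxj.
have noeq : forall k, j < k <= i -> A k != B k.
  move=> k /andP[jk ki]; apply/negP => /eqP E.
  case: (ltngtP k i) => ki'.
  - have : P k by rewrite /P ki' E eqxx.
    move/maxj; lia.
  - lia.
  - by move: anb; rewrite -Ai -Bi -ki' E eqxx.
have [m mdef] : exists m, m = i - j by eexists.
pose c := fun t => if t <= m then A (j + t) else B (j + (m + m).+1 - t).
have cyc : has_Cn_subgraph e (m + m).+1.
  exists (mkseq c (m + m).+1); split.
  - by rewrite size_mkseq.
  - rewrite /mkseq map_inj_in_uniq ?iota_uniq // => t t'.
    rewrite !mem_iota /c !add0n => /andP[_ ht] /andP[_ ht'].
    case: ifP => tm; case: ifP => t'm.
    + move=> E; have := selfA (j + t) (j + t') ltac:(lia) ltac:(lia) E; lia.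
    + move=> E; have := cross (j + t) (j + (m + m).+1 - t') ltac:(lia) ltac:(lia) E => Ek.
      have := noeq (j + t); rewrite E Ek eqxx; lia.
    + move=> E; have := cross (j + t') (j + (m + m).+1 - t) ltac:(lia) ltac:(lia) (esym E) => Ek.
      have := noeq (j + t') ltac:(lia); by rewrite -E -Ek eqxx.
    + move=> E4; have := selfB (j + (m + m).+1 - t) (j + (m + m).+1 - t') ltac:(lia) ltac:(lia) E4; lia.
  - rewrite mkseqS /= rcons_path.
    have Hc : forall k, k < m + m -> e (c k) (c k.+1).
      move=> k hk; rewrite /c; case: ifP => km; case: ifP => k1m.
      + rewrite addnS; apply: HA; lia.
      + have -> : k = m by lia.
        by rewrite mdef subnKC ?(ltnW ji) // Ai
          (_ : j + (i - j + (i - j)).+1 - (i - j).+1 = i) ?Bi //; lia.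
      + lia.
      + rewrite sym.
        have -> : j + (m + m).+1 - k = (j + (m + m).+1 - k.+1).+1 by lia.
        apply: HB; lia.
    have [H1 H2] := @path_mkseq T e (m+m) c Hc.
    rewrite H1 H2 /c /= addn0 leqNgt (_ : m < m + m) /=; last lia.
    have -> : j + (m + m).+1 - (m + m) = j.+1 by lia.
    by rewrite ABj sym HB //; lia.
have mpos : 1 <= m by lia.
case: (ltngtP m 1) => m1; first lia.
- apply: (noC _ _ _ cyc); lia.
- apply: notri; split => //.
  exists (A j); split.
  + apply/eqP => E; rewrite -Ai in E; have := selfA j i ltac:(lia) ltac:(lia) E; lia.
  + apply/eqP => E; rewrite -Bi in E; have := cross j i ltac:(lia) ltac:(lia) E; lia.
  + rewrite -Ai; have -> : i = j.+1 by lia.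
    by rewrite sym HA //; lia.
  + rewrite ABj -Bi; have -> : i = j.+1 by lia.
    by rewrite sym HB //; lia.
Qed.
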